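(* Consider the protocol $P_{RL}$ with parameter $N$ on a directed ring of size $n$ with $2\le n\le N$, under the uniformly random scheduler. Let $C$ be a configuration in which no agent is a leader. Then the expected number of steps until the execution from $C$ reaches a configuration containing a leader is $O(nN)$ (with a constant independent of $n$, $N$ and $C$).
   Context: Model. A population is a directed ring of $n\ge 2$ anonymous agents $u_0,\dots,u_{n-1}$ (indices modulo $n$) with arcs $e_i=(u_i,u_{i+1})$. A configuration assigns a state to each agent. In an interaction on arc $e_i$, initiator $u_i$ and responder $u_{i+1}$ update their states by the transition function and all other agents keep their states. The uniformly random scheduler chooses at each step $t=0,1,2,\dots$ an arc uniformly at random among the $n$ arcs, independently; the execution from $C_0$ is the resulting sequence of configurations $C_0,C_1,\dots$. Protocol $P_{RL}$ (parameter $N$). Each agent has variables $\mathit{leader}\in\{0,1\}$, $\mathit{bullet}\in\{0,1,2\}$, $\mathit{shield}\in\{0,1\}$, $\mathit{signal}\in\{0,1\}$, $\mathit{dist}\in\{0,\dots,N\}$; it is a leader if $\mathit{leader}=1$. In an interaction with initiator $l$ and responder $r$ the following are executed in order: 1. If $l.\mathit{leader}=1$ then $l.\mathit{dist}\gets 0$. 2. If $r.\mathit{leader}=1$ then $r.\mathit{dist}\gets 0$; else if $r.\mathit{bullet}=0$ then $r.\mathit{dist}\gets\min(l.\mathit{dist}+1,N)$. 3. If $r.\mathit{dist}=N$ then $r.\mathit{leader}\gets1$, $r.\mathit{bullet}\gets2$, $r.\mathit{shield}\gets1$, $r.\mathit{signal}\gets0$, $r.\mathit{dist}\gets0$. 4.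 If $l.\mathit{leader}=1$ and $l.\mathit{signal}=1$ then $l.\mathit{bullet}\gets2$, $l.\mathit{shield}\gets1$, $l.\mathit{signal}\gets0$. 5. If $r.\mathit{leader}=1$ and $r.\mathit{signal}=1$ then $r.\mathit{bullet}\gets1$, $r.\mathit{shield}\gets0$, $r.\mathit{signal}\gets0$. 6. If $l.\mathit{bullet}>0$ and $r.\mathit{leader}=1$: set $r.\mathit{leader}\gets0$ if ($l.\mathit{bullet}=2$ and $r.\mathit{shield}=0$); then $l.\mathit{bullet}\gets0$. Else, if $l.\mathit{bullet}>0$ and $r.\mathit{leader}=0$: if $r.\mathit{bullet}=0$ then $r.\mathit{bullet}\gets l.\mathit{bullet}$; then $l.\mathit{bullet}\gets0$ and $r.\mathit{signal}\gets0$. 7. $l.\mathit{signal}\gets\max(l.\mathit{signal},r.\mathit{signal},r.\mathit{leader})$. *)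

(* Defs.v *)
From mathcomp Require Import all_boot all_order all_algebra.
Set Implicit Arguments. Unset Strict Implicit. Unset Printing Implicit Defensive.
Import Order.TTheory GRing.Theory Num.Theory.

Record agent (N : nat) := Agent {
  leader : bool;
  bullet : 'I_3;
  shield : bool;
  signal : bool;
  dist   : 'I_N.+1
}.
Arguments Agent {N}.

Section Protocol.
Variable N : nat.
Implicit Types a l r : agent N.

Definition set_dist a (d : 'I_N.+1) : agent N :=
  Agent (leader a) (bullet a) (shield a) (signal a) d.
Definition set_leader a (b : bool) : agent N :=
  Agent b (bullet a) (shield a) (signal a) (dist a).
Definition set_bullet a (b : 'I_3) : agent N :=
  Agent (leader a) b (shield a) (signal a) (dist a).
Definition set_signal a (b : bool) : agent N :=
  Agent (leader a) (bullet a) (shield a) b (dist a).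

Definition b0 : 'I_3 := inord 0.
Definition b1 : 'I_3 := inord 1.
Definition b2 : 'I_3 := inord 2.
Definition d0 : 'I_N.+1 := inord 0.

Definition st1 l r : agent N * agent N :=
  (if leader l then set_dist l d0 else l, r).
Definition st2 l r : agent N * agent N :=
  (l, if leader r then set_dist r d0
      else if nat_of_ord (bullet r) == 0 then set_dist r (inord (minn (dist l).+1 N))
      else r).
Definition st3 l r : agent N * agent N :=
  (l, if nat_of_ord (dist r) == N then Agent true b2 true false d0 else r).
Definition st4 l r : agent N * agent N :=
  (if leader l && signal l then Agent (leader l) b2 true false (dist l) else l, r).
Definition st5 l r : agent N * agent N :=
  (l, if leader r && signal r then Agent (leader r) b1 false false (dist r) else r).
Definition st6 l r : agent N * agent N :=
  if (0 < bullet l) && leader r then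
    (set_bullet l b0,
     if (nat_of_ord (bullet l) == 2) && ~~ shield r then set_leader r false else r)
  else if (0 < bullet l) && ~~ leader r then
    (set_bullet l b0,
     set_signal (if nat_of_ord (bullet r) == 0 then set_bullet r (bullet l) else r) false)
  else (l, r).
Definition st7 l r : agent N * agent N :=
  (set_signal l [|| signal l, signal r | leader r], r).

Definition lift2 (f : agent N -> agent N -> agent N * agent N) (p : agent N * agent N) :=
  f p.1 p.2.

(* transition function: initiator l, responder r, steps 1..7 in order *)
Definition delta l r : agent N * agent N :=
  lift2 st7 (lift2 st6 (lift2 st5 (lift2 st4 (lift2 st3 (lift2 st2 (st1 l r)))))).

End Protocol.

Definition config (N n : nat) := 'I_n -> agent N.

Definition step (N n : nat) (C : config N n) (i : 'I_n) : config N n :=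
  fun j => if j == i then (delta (C i) (C (ordS i))).1
           else if j == ordS i then (delta (C i) (C (ordS i))).2
           else C j.

Definition has_leader (N n : nat) (C : config N n) : bool :=
  [exists j : 'I_n, leader (C j)].

(* surv t C = probability, under the uniformly random scheduler, that the
   configurations C_0, ..., C_t of the execution from C_0 = C all contain no
   leader, i.e. P(T > t) where T is the hitting time of a leader configuration. *)
Fixpoint surv (N n : nat) (t : nat) (C : config N n) : rat :=
  if has_leader C then 0%R
  else match t with
       | 0 => 1%R
       | t'.+1 => ((n%:R)^-1 * \sum_(i < n) surv t' (step C i))%R
       end.

(* Expected hitting time E[T] = sum_{t >= 0} P(T > t); partial sums: *)
Definition exp_time_partial (N n : nat) (C : config N n) (T : nat) : rat :=
  (\sum_(t < T) surv t C)%R.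

(* Main.v *)
Require Import Defs.
From mathcomp Require Import all_boot all_order all_algebra.
From mathcomp Require Import zify.
Import Order.TTheory GRing.Theory Num.Theory.
From mathcomp Require Import ring lra.
Set Implicit Arguments. Unset Strict Implicit.
Lemma vb0 : nat_of_ord b0 = 0. Proof. by rewrite /b0 inordK. Qed.
Lemma vb1 : nat_of_ord b1 = 1. Proof. by rewrite /b1 inordK. Qed.
Lemma vb2 : nat_of_ord b2 = 2. Proof. by rewrite /b2 inordK. Qed.
Lemma vd0 N : nat_of_ord (d0 N) = 0. Proof. by rewrite /d0 inordK. Qed.

Lemma delta_facts N (l r : agent N) : ~~ leader l -> ~~ leader r ->
  let d2 := if nat_of_ord (bullet r) == 0 then minn (dist l).+1 N else nat_of_ord (dist r) in
  [/\ leader (delta l r).1 = false, leader (delta l r).2 = (d2 == N),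
      (0 < bullet (delta l r).1)%N = false, nat_of_ord (dist (delta l r).1) = dist l &
      d2 != N -> ((0 < bullet (delta l r).2)%N = (0 < bullet r)%N || (0 < bullet l)%N)
                 /\ nat_of_ord (dist (delta l r).2) = d2].
Proof.
case: l r => [ll lb ls lsg ld] [rl rb rs rsg rd] /= /negbTE -> /negbTE ->.
rewrite /delta /lift2 /st1 /st2 /st3 /st4 /st5 /st6 /st7 /=.
have Hm : (minn ld.+1 N < N.+1)%N by rewrite ltnS geq_minr.
repeat (match goal with |- context [if ?c then _ else _] => lazymatch c with context [if _ then _ else _] => fail | _ => idtac end; let H := fresh "H" in case: (boolP c) => H end; rewrite /= ?vb0 ?vb1 ?vb2 ?vd0 ?inordK //=).
all: constructor; try done; try (move=> ?; split); try lia.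
all: try lia.

Qed.

Section Pot.
Variable n : nat.
Variable b : 'I_n -> bool.
Variable d : 'I_n -> nat.

Fixpoint ev (j : 'I_n) (m : nat) : nat :=
  match m with 0 => d j | m'.+1 => if b j then d j else (ev (ord_pred j) m').+1 end.
Definition E j := ev j n.

Lemma iter_pred_val t (x : 'I_n) : (t <= x)%N ->
  nat_of_ord (iter t (@ord_pred n) x) = (x - t)%N.
Proof.
elim: t => [|t IH] Ht /=; first by rewrite subn0.
have Hx := ltn_ord x.
rewrite IH ?(ltnW Ht) //.
have -> : ((x - t + n).-1 = (x - t.+1) + n)%N by lia.
by rewrite modnDr modn_small //; lia.
Qed.

Lemma reach (j k : 'I_n) : exists2 s, (s < n)%N & iter s (@ord_pred n) j = k.
Proof.
have Hj := ltn_ord j; have Hk := ltn_ord k.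
case: (leqP k j) => Hkj.
  exists (j - k)%N; first by lia.
  by apply: val_inj; rewrite /= iter_pred_val; lia.
exists ((n.-1 - k) + j.+1)%N; first by lia.
rewrite iterD iterS.
have H0 : nat_of_ord (iter j (@ord_pred n) j) = 0%N by rewrite iter_pred_val // subnn.
have H1 : nat_of_ord (ord_pred (iter j (@ord_pred n) j)) = n.-1.
  by rewrite /= H0 add0n modn_small //; lia.
by apply: val_inj; rewrite /= iter_pred_val H1; lia.
Qed.

Lemma ev_stab m j : (exists2 s, (s < m)%N & b (iter s (@ord_pred n) j)) -> ev j m = ev j m.+1.
Proof.
elim: m j => [|m IH] j [s Hs Hb] //=.
case: (boolP (b j)) => Hj //=; congr S; apply: IH.
case: s Hs Hb => [|s] Hs Hb; first by rewrite /= in Hb; rewrite Hb in Hj.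
by exists s => //; rewrite -iterSr.
Qed.

Hypothesis hb : exists k, b k.

Lemma reach_b j : exists2 s, (s < n)%N & b (iter s (@ord_pred n) j).
Proof. case: hb => k Hk; have [s Hs Hsk] := reach j k; exists s => //; by rewrite Hsk. Qed.

Lemma E_rec j : E j = if b j then d j else (E (ord_pred j)).+1.
Proof. by rewrite /E (ev_stab (reach_b j)). Qed.

Lemma E_uniq (G : 'I_n -> nat) :
  (forall j, G j = if b j then d j else (G (ord_pred j)).+1) -> forall j, G j = E j.
Proof.
move=> HG j; have [s _ Hs] := reach_b j.
elim: s j Hs => [|s IH] j Hs; first by rewrite /= in Hs; rewrite HG E_rec Hs.
rewrite HG E_rec; case: (b j) => //; congr S; apply: IH; by rewrite -iterSr.
Qed.

End Pot.

Lemma ev_le n b d N0 : (forall j : 'I_n, (d j <= N0)%N) -> forall m j, (@ev n b d j m <= N0 + m)%N.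
Proof.
move=> Hd; elim=> [|m IH] j /=; first by rewrite addn0.
case: (b j); first by apply: leq_trans (Hd j) _; rewrite leq_addr.
by rewrite addnS ltnS.
Qed.
Definition bbC N n (C : config N n) j := (0 < bullet (C j))%N.
Definition ddC N n (C : config N n) j := nat_of_ord (dist (C j)).

Lemma ordS_neq n (i : 'I_n) : (1 < n)%N -> ordS i != i.
Proof.
move=> Hn; apply/eqP => /(congr1 val) /= H; have H1 := ltn_ord i.
case: (ltnP i.+1 n) => H2.
  by rewrite modn_small // in H; lia.
have H3 : i.+1 = n by lia.
by rewrite H3 modnn in H; lia.
Qed.

Lemma pred_neq n (i : 'I_n) : (1 < n)%N -> ord_pred i != i.
Proof.
move=> Hn; apply/eqP => H; have := ordS_neq i Hn.
by rewrite -{1}H ord_predK eqxx.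
Qed.

Section Step.
Variables (N n : nat) (C : config N n) (i : 'I_n).
Hypothesis Hn : (1 < n)%N.
Hypothesis HC : ~~ has_leader C.

Local Notation i1 := (ordS i).
Definition d2 := if nat_of_ord (bullet (C i1)) == 0 then minn (ddC C i).+1 N else ddC C i1.

Lemma nlC j : ~~ leader (C j).
Proof. by move: HC; rewrite /has_leader negb_exists => /forallP. Qed.

Lemma step_other j : j != i -> j != i1 -> step C i j = C j.
Proof. by rewrite /step => /negbTE -> /negbTE ->. Qed.

Lemma step_i : step C i i = (delta (C i) (C i1)).1.
Proof. by rewrite /step eqxx. Qed.

Lemma step_i1 : step C i i1 = (delta (C i) (C i1)).2.
Proof. by rewrite /step (negbTE (ordS_neq i Hn)) eqxx. Qed.

Lemma has_leader_step : has_leader (step C i) = (d2 == N).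
Proof.
have [L1 L2 _ _ _] := delta_facts (nlC i) (nlC i1).
apply/existsP/idP => [[j]|H]; last by exists i1; rewrite step_i1 L2.
case: (eqVneq j i) => [->|Hji]; first by rewrite step_i L1.
case: (eqVneq j i1) => [->|Hji1]; first by rewrite step_i1 L2.
by rewrite step_other // (negbTE (nlC j)).
Qed.

Hypothesis HC' : ~~ has_leader (step C i).

Lemma bb_step j : bbC (step C i) j =
  if j == i then false else if j == i1 then bbC C i1 || bbC C i else bbC C j.
Proof.
have [L1 L2 B1 D1 R] := delta_facts (nlC i) (nlC i1).
have HC2 := HC'; rewrite has_leader_step in HC2.
have [B2 D2] := R HC2.
case: (eqVneq j i) => [->|Hji]; first by rewrite /bbC step_i B1.
case: (eqVneq j i1) => [->|Hji1]; first by rewrite /bbC step_i1 B2.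
by rewrite /bbC step_other.
Qed.

Lemma dd_step j : ddC (step C i) j =
  if j == i1 then (if bbC C i1 then ddC C i1 else (ddC C i).+1) else ddC C j.
Proof.
have [L1 L2 B1 D1 R] := delta_facts (nlC i) (nlC i1).
have HC2 := HC'; rewrite has_leader_step in HC2.
have [B2 D2] := R HC2.
case: (eqVneq j i1) => [->|Hji1].
  rewrite /ddC step_i1 D2 /bbC; move: HC2; rewrite /d2 /ddC /=.
  case: (boolP (nat_of_ord (bullet (C i1)) == 0%N)) => Hb /=;
  case: (boolP (0 < bullet (C i1))%N) => Hb2 /=; lia.
case: (eqVneq j i) => [->|Hji]; first by rewrite /ddC step_i D1.
by rewrite /ddC step_other.
Qed.

End Step.
Definition hasb N n (C : config N n) := [exists j, bbC C j].

Definition Fp N n (C : config N n) : nat :=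
  if hasb C then (\sum_j E (bbC C) (ddC C) j)%N else (\sum_j ddC C j)%N.

Definition Dl N n (C : config N n) (i : 'I_n) : rat :=
  if hasb C then ((E (bbC C) (ddC C) (ord_pred i)).+1%:R - (E (bbC C) (ddC C) i)%:R)%R
  else ((ddC C i).+1%:R - (ddC C (ordS i))%:R)%R.

Section Main.
Variables (N n : nat) (C : config N n) (i : 'I_n).
Hypothesis Hn : (1 < n)%N.
Hypothesis HC : ~~ has_leader C.
Hypothesis HC' : ~~ has_leader (step C i).
Local Notation i1 := (ordS i).

Lemma F_step_nat : (Fp (step C i) + (if hasb C then E (bbC C) (ddC C) i else ddC C i1) =
   Fp C + (if hasb C then (E (bbC C) (ddC C) (ord_pred i)).+1 else (ddC C i).+1))%N.
Proof.
have Hbb := bb_step Hn HC HC'.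
have Hdd := dd_step Hn HC HC'.
rewrite /Fp /hasb.
case: (boolP [exists j, bbC C j]) => [/existsP [k Hk]|Hno].
  have Hk' : [exists j, bbC (step C i) j].
    apply/existsP; exists (if k == i then i1 else k).
    case: (eqVneq k i) => [Eki|Hki]; first by rewrite Hbb eqxx (negbTE (ordS_neq i Hn)) -Eki Hk orbT.
    rewrite Hbb (negbTE Hki); case: (eqVneq k i1) => [Eki1|Hki1]; [by rewrite -Eki1 Hk | by []].
  rewrite Hk'.
  set b := bbC C; set d := ddC C.
  pose G j := if j == i then (E b d (ord_pred i)).+1 else E b d j.
  have HG : forall j, G j = E (bbC (step C i)) (ddC (step C i)) j.
    apply: E_uniq; first by move/existsP: Hk'.
    move=> j; rewrite Hbb Hdd /G.
    have Hpi : (ord_pred i == i) = false by apply/negbTE/pred_neq.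
    case: (eqVneq j i) => [->|Hji]; first by rewrite ?Hpi ?eqxx.
    case: (eqVneq j i1) => [->|Hji1].
      rewrite ordSK eqxx (@E_rec _ b d (ex_intro _ k Hk) i1) ordSK.
      rewrite (@E_rec _ b d (ex_intro _ k Hk) i).
      by rewrite /b /d; case: (bbC C i1); case: (bbC C i).
    have Hpj : (ord_pred j == i) = false.
      apply/negbTE; apply: contra Hji1 => /eqP <-; by rewrite ord_predK.
    by rewrite Hpj (@E_rec _ b d (ex_intro _ k Hk) j).
  under [X in (X + _)%N]eq_bigr => j _ do rewrite -HG.
  rewrite (bigD1 i) //= [X in (_ = X + _)%N](bigD1 i) //= /G eqxx.
  rewrite (eq_bigr (fun j => E b d j)); last by move=> j /negbTE ->.
  lia.
have Hno' : [exists j, bbC (step C i) j] = false.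
  apply/negbTE; move: Hno; rewrite !negb_exists => /forallP Hno; apply/forallP => j.
  rewrite Hbb; case: (j == i) => //; case: (j == i1); by rewrite ?negb_or ?Hno.
rewrite Hno' ?(negbTE Hno).
rewrite (bigD1 i1) //= [X in (_ = X + _)%N](bigD1 i1) //= Hdd eqxx.
have -> : bbC C i1 = false by apply/negbTE; move: Hno; rewrite negb_exists => /forallP.
rewrite (eq_bigr (fun j => ddC C j)); last by move=> j /negbTE Hj; rewrite Hdd Hj.
lia.
Qed.

End Main.
Local Open Scope ring_scope.

Lemma F_step N n (C : config N n) (i : 'I_n) : (1 < n)%N -> ~~ has_leader C ->
  ~~ has_leader (step C i) -> (Fp (step C i))%:R = (Fp C)%:R + Dl C i :> rat.
Proof.
move=> Hn HC HC'; have := congr1 (fun x => x%:R : rat) (F_step_nat Hn HC HC').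
rewrite /= !natrD /Dl; case: (hasb C) => H; lra.
Qed.

Lemma sum_Dl N n (C : config N n) : \sum_i Dl C i = n%:R.
Proof.
rewrite /Dl; case: (hasb C); rewrite sumrB.
  have -> : \sum_i ((E (bbC C) (ddC C) (ord_pred i)).+1%:R : rat) =
            \sum_i (E (bbC C) (ddC C) i)%:R + n%:R.
    rewrite (eq_bigr (fun i => (E (bbC C) (ddC C) (ord_pred i))%:R + 1)); last first.
      by move=> i _; rewrite -natr1.
    rewrite big_split /= sumr_const card_ord.
    by rewrite [X in _ = X + _](reindex_inj (@ord_pred_inj n)).
  by rewrite addrC addKr.
have -> : \sum_i ((ddC C i).+1%:R : rat) = \sum_i (ddC C (ordS i))%:R + n%:R.
  rewrite (eq_bigr (fun i => (ddC C i)%:R + 1)); last by move=> i _; rewrite -natr1.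
  rewrite big_split /= sumr_const card_ord.
  by rewrite [X in X + _ = _](reindex_inj (@ordS_inj n)).
by rewrite addrC addKr.
Qed.

Lemma dd_le N n (C : config N n) j : (ddC C j <= N)%N.
Proof. by rewrite /ddC -ltnS ltn_ord. Qed.

Lemma Fp_le N n (C : config N n) : (Fp C <= n * (N + n))%N.
Proof.
rewrite /Fp; case: (hasb C).
  apply: leq_trans (_ : (\sum_(j < n) (N + n) <= _)%N).
    apply: leq_sum => j _; exact: ev_le (dd_le C) _ _.
  by rewrite sum_nat_const card_ord.
apply: leq_trans (_ : (\sum_(j < n) (N + n) <= _)%N).
  apply: leq_sum => j _; apply: leq_trans (dd_le C j) _; exact: leq_addr.
by rewrite sum_nat_const card_ord.
Qed.

Lemma Dl_le N n (C : config N n) i : Dl C i <= (N + n).+1%:R.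
Proof.
rewrite /Dl; case: (hasb C).
  have h1 : ((E (bbC C) (ddC C) (ord_pred i)).+1%:R <= (N + n).+1%:R :> rat).
    by rewrite ler_nat ltnS; exact: ev_le (dd_le C) _ _.
  have h2 : (0 <= (E (bbC C) (ddC C) i)%:R :> rat) by exact: ler0n.
  lra.
have h1 : ((ddC C i).+1%:R <= (N + n).+1%:R :> rat).
  by rewrite ler_nat ltnS; apply: leq_trans (dd_le C i) _; exact: leq_addr.
have h2 : (0 <= (ddC C (ordS i))%:R :> rat) by exact: ler0n.
lra.
Qed.

Definition Psi N n (C : config N n) : rat :=
  if has_leader C then 0 else 4 * (n * N)%:R - (Fp C)%:R.

Lemma K_bound N n (C : config N n) : (2 <= n)%N -> (n <= N)%N ->
  (Fp C)%:R + (N + n).+1%:R <= 4 * (n * N)%:R :> rat.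
Proof.
move=> H2 HnN; have := Fp_le C => HF.
have : ((Fp C + (N + n).+1)%:R <= (4 * (n * N))%:R :> rat) by rewrite ler_nat; nia.
by rewrite natrD natrM.
Qed.

Lemma main_ineq N n (C : config N n) : (2 <= n)%N -> (n <= N)%N -> ~~ has_leader C ->
  1 + n%:R^-1 * \sum_i Psi (step C i) <= Psi C.
Proof.
move=> H2 HnN HC.
have Hn : (1 < n)%N by [].
set K := (4 * (n * N)%:R : rat); set F := ((Fp C)%:R : rat).
have Hle : \sum_i Psi (step C i) <= \sum_(i < n) (K - F - Dl C i).
  apply: ler_sum => i _; rewrite /Psi.
  case: (boolP (has_leader (step C i))) => H.
    have := K_bound C H2 HnN; have := Dl_le C i; rewrite -/K -/F; lra.
  by rewrite F_step // -/F /K; lra.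
have Hsum : \sum_(i < n) (K - F - Dl C i) = n%:R * (K - F) - n%:R.
  by rewrite sumrB sumr_const card_ord (sum_Dl C) mulr_natl.
have Hn0 : n%:R != 0 :> rat by rewrite pnatr_eq0; lia.
rewrite /Psi (negbTE HC) -/K -/F.
apply: le_trans (_ : 1 + n%:R^-1 * (n%:R * (K - F) - n%:R) <= _).
  by rewrite lerD2l ler_wpM2l ?invr_ge0 ?ler0n // -Hsum.
have -> : n%:R^-1 * (n%:R * (K - F) - n%:R) = K - F - 1.
  by field.
lra.
Qed.

Lemma surv_leader N n t (C : config N n) : has_leader C -> surv t C = 0.
Proof. by move=> H; case: t => [|t] /=; rewrite H. Qed.

Lemma survS N n t (C : config N n) : ~~ has_leader C ->
  surv t.+1 C = n%:R^-1 * \sum_i surv t (step C i).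
Proof. by move=> H /=; rewrite (negbTE H). Qed.

Lemma etp_bound N n T (C : config N n) : (2 <= n)%N -> (n <= N)%N ->
  exp_time_partial C T <= Psi C.
Proof.
move=> H2 HnN; elim: T C => [|T IH] C.
  rewrite /exp_time_partial big_ord0 /Psi; case: ifP => // _.
  rewrite subr_ge0; have := K_bound C H2 HnN.
  have : (0 <= (N + n).+1%:R :> rat) by exact: ler0n.
  lra.
case: (boolP (has_leader C)) => H.
  rewrite /exp_time_partial big1 /Psi ?H // => t _; exact: surv_leader.
rewrite /exp_time_partial big_ord_recl /= (negbTE H).
under eq_bigr => t _ do rewrite add0n.
rewrite -mulr_sumr exchange_big /=.
apply: le_trans (main_ineq H2 HnN H).
rewrite lerD2l ler_wpM2l ?invr_ge0 ?ler0n //.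
by apply: ler_sum => i _; exact: IH.
Qed.

Theorem lemma10 :
  exists c : rat, 0 < c /\
    forall (N n : nat), (2 <= n)%N -> (n <= N)%N ->
    forall C : config N n, ~~ has_leader C ->
    forall T : nat, exp_time_partial C T <= c * (n * N)%:R.
Proof.
exists 4; split => // N n H2 HnN C HC T.
apply: le_trans (etp_bound T C H2 HnN) _.
rewrite /Psi (negbTE HC).
have : (0 <= (Fp C)%:R :> rat) by exact: ler0n.
lra.
Qed.
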